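(* Let $P \subset \mathbb{R}^2$ be a finite point set satisfying the standing condition, let $\varepsilon \in (0,1)$, let $X = \{t_1,\dots,t_m\}$ be the set of extreme points of $P$ indexed in counterclockwise order of their polar angles (indices taken cyclically, so $t_{m+1} = t_1$), and for each $i \in \{1,\dots,m\}$ let $x^*_i \in \mathbb{S}^1$ be the unit vector with $\langle t_i, x\rangle = \langle t_{i+1}, x\rangle$ and $\langle t_i, x\rangle > 0$. Define $$S = X \cup \{ p \in P \setminus X : \exists\, i \in \{1,\dots,m\} \text{ with } \langle p, x^*_i\rangle \geq (1-\varepsilon)\langle t_i, x^*_i\rangle \}.$$ Then for every $p \in P$: $p \in S$ if and only if $R_\varepsilon(p) \neq \varnothing$.
   Context: For a finite $Q \subset \mathbb{R}^2$ and unit vector $x$, $\omega(x,Q) = \max_{p \in Q}\langle p,x\rangle$. Standing condition: $\omega(x,P) > 0$ for all $x \in \mathbb{S}^1$ (the origin is interior to the convex hull of $P$). The Voronoi cell of $p \in P$ is $R(p) = \{x \in \mathbb{R}^2 \setminus \{0\} : \langle p,x\rangle \geq \omega(x,P)\}$; $p$ is an extreme point iff $R(p) \neq \varnothing$ (the extreme points are exactly the vertices of the convex hull of $P$). The $\varepsilon$-approximate Voronoi cell of $p$ is $R_\varepsilon(p) = \{x \in \mathbb{R}^2 \setminus \{0\} : \langle p,x\rangle \geq (1-\varepsilon)\,\omega(x,P)\}$. *)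

(* Defs.v *)
From Stdlib Require Import Reals Lra List.
Open Scope R_scope.

Definition pt := (R * R)%type.

Definition dot (p x : pt) : R := fst p * fst x + snd p * snd x.

Definition norm2 (p : pt) : R := sqrt (fst p * fst p + snd p * snd p).

Definition unit_vec (x : pt) : Prop := norm2 x = 1.

(* omega(x, Q) = max_{p in Q} <p, x>  (Q a nonempty finite list; 0 for the empty list) *)
Definition omega (x : pt) (Q : list pt) : R :=
  match Q with
  | nil => 0
  | q :: qs => fold_right (fun p acc => Rmax (dot p x) acc) (dot q x) qs
  end.

Definition standing (P : list pt) : Prop :=
  forall x : pt, unit_vec x -> 0 < omega x P.

Definition voronoi_cell (P : list pt) (p : pt) (x : pt) : Prop :=
  x <> (0, 0) /\ dot p x >= omega x P.

Definition approx_voronoi_cell (P : list pt) (eps : R) (p : pt) (x : pt) : Prop :=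
  x <> (0, 0) /\ dot p x >= (1 - eps) * omega x P.

Definition extreme (P : list pt) (p : pt) : Prop :=
  In p P /\ exists x, voronoi_cell P p x.

Definition polar_angle (p : pt) (th : R) : Prop :=
  0 <= th < 2 * PI /\ fst p = norm2 p * cos th /\ snd p = norm2 p * sin th.

Definition ccw_indexed (t : list pt) : Prop :=
  exists th : nat -> R,
    (forall i, (i < length t)%nat -> polar_angle (nth i t (0, 0)) (th i)) /\
    (forall i j, (i < j)%nat -> (j < length t)%nat -> th i < th j).

(* t_i with indices taken cyclically (0-based) *)
Definition tcyc (t : list pt) (i : nat) : pt := nth (i mod length t) t (0, 0).

Definition in_S (P : list pt) (eps : R) (t : list pt) (xs : nat -> pt) (p : pt) : Prop :=
  In p t \/
  (In p P /\ ~ In p t /\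
   exists i, (i < length t)%nat /\ dot p (xs i) >= (1 - eps) * dot (tcyc t i) (xs i)).

(* Main.v *)
Require Import Defs.
From Stdlib Require Import Reals Lra Lia List Classical.
Open Scope R_scope.

Definition cross (a b : pt) : R := fst a * snd b - snd a * fst b.

Lemma omega_ge_aux (x : pt) (q0 : pt) (qs : list pt) :
  forall q, In q (q0 :: qs) ->
  dot q x <= fold_right (fun p acc => Rmax (dot p x) acc) (dot q0 x) qs.
Proof.
  induction qs as [|a qs IH]; intros q Hq; simpl in *.
  - destruct Hq as [<-|[]]; lra.
  - destruct Hq as [<-|[<-|Hq]].
    + eapply Rle_trans; [apply (IH q0); left; reflexivity| apply Rmax_r].
    + apply Rmax_l.
    + eapply Rle_trans; [apply (IH q); right; exact Hq| apply Rmax_r].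
Qed.

Lemma omega_ge (P : list pt) (q x : pt) : In q P -> dot q x <= omega x P.
Proof.
  destruct P as [|q0 qs]; [intros []|]. intros Hq. simpl omega. apply omega_ge_aux; exact Hq.
Qed.

Lemma omega_att (P : list pt) (x : pt) : P <> nil -> exists q, In q P /\ omega x P = dot q x.
Proof.
  destruct P as [|q0 qs]; [intros H; contradiction|]. intros _. simpl omega.
  induction qs as [|a qs IH]; simpl.
  - exists q0; split; [left; reflexivity| reflexivity].
  - destruct IH as [q [Hq Heq]]. unfold Rmax. destruct (Rle_dec (dot a x) _).
    + exists q; split; [destruct Hq as [<-|Hq]; [left; reflexivity|right; right; exact Hq]|exact Heq].
    + exists a; split; [right; left; reflexivity| reflexivity].
Qed.

Lemma nz_sq (y : pt) : y <> (0,0) -> 0 < fst y * fst y + snd y * snd y.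
Proof.
  destruct y as [a b]; simpl; intros H.
  destruct (Rlt_le_dec 0 (a*a+b*b)) as [h|h]; [exact h|].
  exfalso; apply H. assert (a = 0) by nra. assert (b = 0) by nra. subst; reflexivity.
Qed.

Lemma unit_nz (x : pt) : unit_vec x -> x <> (0,0).
Proof.
  unfold unit_vec, norm2. intros H E. subst x. simpl in H.
  replace (0*0+0*0) with 0 in H by ring. rewrite sqrt_0 in H. lra.
Qed.

Lemma omega_pos (P : list pt) (y : pt) : standing P -> y <> (0,0) -> 0 < omega y P.
Proof.
  intros HS Hy. pose proof (nz_sq y Hy) as Hs.
  set (s := fst y * fst y + snd y * snd y) in *.
  set (n := sqrt s). assert (Hn : 0 < n) by (apply sqrt_lt_R0; exact Hs).
  assert (Hnn : n * n = s) by (apply sqrt_sqrt; lra).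
  set (y' := (fst y / n, snd y / n)).
  assert (Hu : unit_vec y').
  { unfold unit_vec, norm2, y'; simpl.
    replace (fst y / n * (fst y / n) + snd y / n * (snd y / n)) with 1.
    apply sqrt_1. transitivity (s / (n*n)); [rewrite Hnn; field; lra|].
    unfold s; field; lra. }
  pose proof (HS y' Hu) as H1.
  assert (HP : P <> nil) by (intros E; subst P; simpl in H1; lra).
  destruct (omega_att P y' HP) as [q [Hq Heq]].
  pose proof (omega_ge P q y Hq).
  assert (dot q y = n * dot q y') by (unfold dot, y'; simpl; field; lra).
  nra.
Qed.

Lemma max_in_t (P t : list pt) (y : pt) :
  (forall q, In q t <-> extreme P q) -> P <> nil -> y <> (0,0) ->
  exists k, (k < length t)%nat /\ omega y P = dot (nth k t (0,0)) y.
Proof.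
  intros Hext HP Hy. destruct (omega_att P y HP) as [q [Hq Heq]].
  assert (In q t) as Ht.
  { apply Hext. split; [exact Hq|]. exists y. split; [exact Hy| lra]. }
  destruct (In_nth t q (0,0) Ht) as [k [Hk Hn]]. exists k; split; [exact Hk|]. rewrite Hn; exact Heq.
Qed.

Lemma not_ext_combo (P : list pt) (q a b : pt) (al be : R) :
  standing P -> In a P -> In b P -> 0 <= al -> 0 <= be -> al + be < 1 ->
  fst q = al * fst a + be * fst b -> snd q = al * snd a + be * snd b ->
  ~ extreme P q.
Proof.
  intros HS Ha Hb H1 H2 H3 E1 E2 [_ [y [Hy Hge]]].
  pose proof (omega_pos P y HS Hy). pose proof (omega_ge P a y Ha). pose proof (omega_ge P b y Hb).
  assert (dot q y = al * dot a y + be * dot b y) by (unfold dot; rewrite E1, E2; ring).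
  set (W := omega y P) in *. nra.
Qed.

Lemma walk (g : nat -> R) (m : nat) :
  (0 < m)%nat -> (forall n, g n = g (n mod m)) ->
  (exists k, g k >= 0) -> (exists l, g l <= 0) ->
  exists k, (k < m)%nat /\ g k >= 0 /\ g (S k) <= 0.
Proof.
  intros Hm Hper [k Hk] [l Hl]. apply NNPP; intro H.
  assert (Hstep : forall n, g n >= 0 -> g (S n) > 0).
  { intros n Hn. destruct (Rle_lt_dec (g (S n)) 0) as [h|h]; [|lra]. exfalso. apply H.
    exists (n mod m). split; [apply Nat.mod_upper_bound; lia|]. split.
    - rewrite <- Hper; exact Hn.
    - rewrite Hper. replace (S (n mod m)) with (n mod m + 1)%nat by lia.
      rewrite Nat.Div0.add_mod_idemp_l. rewrite <- Hper. replace (n+1)%nat with (S n) by lia. exact h. }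
  assert (Hall : forall j, g (k + j)%nat >= 0).
  { induction j. - rewrite Nat.add_0_r; exact Hk.
    - replace (k + S j)%nat with (S (k + j)) by lia. apply Hstep in IHj. lra. }
  pose proof (Hstep _ (Hall (l + (m-1) * S k)%nat)) as Hc.
  replace (S (k + (l + (m - 1) * S k))) with (l + S k * m)%nat in Hc.
  2:{ destruct m as [|m']; [lia|]. replace (S m' - 1)%nat with m' by lia. ring. }
  rewrite Hper, Nat.Div0.mod_add, <- Hper in Hc. lra.
Qed.

Lemma cross_polar (a b : pt) (ra rb x y : R) :
  fst a = ra * cos x -> snd a = ra * sin x -> fst b = rb * cos y -> snd b = rb * sin y ->
  cross a b = ra * rb * sin (y - x).
Proof. intros H1 H2 H3 H4. unfold cross. rewrite H1, H2, H3, H4, sin_minus. ring. Qed.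

Lemma dot_polar (a : pt) (ra x g : R) :
  fst a = ra * cos x -> snd a = ra * sin x -> dot a (cos g, sin g) = ra * cos (x - g).
Proof. intros H1 H2. unfold dot; simpl. rewrite H1, H2, cos_minus. ring. Qed.

Lemma cos_np (u : R) : (PI/2 <= u <= 3*(PI/2)) \/ (-(3*(PI/2)) <= u <= -(PI/2)) -> cos u <= 0.
Proof.
  intros [[h1 h2]|[h1 h2]]. - apply cos_le_0; lra.
  - rewrite <- (Ropp_involutive u), cos_neg. apply cos_le_0; lra.
Qed.

Lemma sin_pos_range (u : R) : 0 < sin u -> -(2*PI) < u < 2*PI -> (0 < u < PI) \/ (-(2*PI) < u < -PI).
Proof.
  intros Hs Hu. pose proof PI_RGT_0.
  destruct (Rle_lt_dec PI u). { pose proof (sin_le_0 u ltac:(lra) ltac:(lra)); lra. }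
  destruct (Rle_lt_dec u 0).
  - destruct (Rle_lt_dec (-PI) u).
    + pose proof (sin_ge_0 (-u) ltac:(lra) ltac:(lra)). rewrite sin_neg in H0. lra.
    + right; lra.
  - left; lra.
Qed.

Lemma ext_nz (P t : list pt) (v : pt) : standing P -> (forall q, In q t <-> extreme P q) ->
  In v t -> 0 < norm2 v.
Proof.
  intros HS Hext Hv. apply Hext in Hv. destruct Hv as [_ [y [Hy Hge]]].
  pose proof (omega_pos P y HS Hy).
  assert (v <> (0,0)) as Hv. { intros E; subst v. unfold dot in Hge; simpl in Hge. lra. }
  apply sqrt_lt_R0, nz_sq, Hv.
Qed.

Lemma tcyc_lt (t : list pt) (i : nat) : (i < length t)%nat -> tcyc t i = nth i t (0,0).
Proof. intros H. unfold tcyc. rewrite Nat.mod_small; auto. Qed.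

Lemma tcyc_last (t : list pt) (i : nat) : S i = length t -> tcyc t (S i) = nth 0 t (0,0).
Proof. intros H. unfold tcyc. rewrite H, Nat.Div0.mod_same; auto. Qed.

Lemma halfplane (P t : list pt) (th : nat -> R) (gm : R) :
  standing P -> (forall q, In q t <-> extreme P q) -> P <> nil ->
  (forall k, (k < length t)%nat -> polar_angle (nth k t (0,0)) (th k)) ->
  (forall k, (k < length t)%nat -> cos (th k - gm) <= 0) -> False.
Proof.
  intros HS Hext HP Hpol Hc.
  assert (Hy : (cos gm, sin gm) <> (0,0)).
  { intros E. injection E as E1 E2. pose proof (sin2_cos2 gm). rewrite E1, E2 in H. unfold Rsqr in H. lra. }
  destruct (max_in_t P t _ Hext HP Hy) as [k [Hk Heq]].
  pose proof (omega_pos P _ HS Hy).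
  destruct (Hpol k Hk) as [_ [H1 H2]].
  rewrite (dot_polar _ _ _ _ H1 H2) in Heq.
  pose proof (ext_nz P t (nth k t (0,0)) HS Hext (nth_In _ _ Hk)).
  pose proof (Hc k Hk). nra.
Qed.

Lemma F1 (P t : list pt) (th : nat -> R) :
  standing P -> (forall q, In q t <-> extreme P q) -> P <> nil ->
  (forall k, (k < length t)%nat -> polar_angle (nth k t (0,0)) (th k)) ->
  (forall i j, (i < j)%nat -> (j < length t)%nat -> th i < th j) ->
  forall i, (i < length t)%nat -> 0 < cross (tcyc t i) (tcyc t (S i)).
Proof.
  intros HS Hext HP Hpol Hinc i Hi. pose proof PI_RGT_0 as Hpi.
  assert (Hr : forall k, (k < length t)%nat -> 0 < norm2 (nth k t (0,0)))
    by (intros k Hk; exact (ext_nz P t _ HS Hext (nth_In _ _ Hk))).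
  assert (Hrng : forall k, (k < length t)%nat -> 0 <= th k < 2 * PI)
    by (intros k Hk; apply (Hpol k Hk)).
  destruct (Nat.lt_ge_cases (S i) (length t)) as [Hs|Hs].
  - rewrite (tcyc_lt t i Hi), (tcyc_lt t (S i) Hs).
    destruct (Hpol i Hi) as [_ [A1 A2]]. destruct (Hpol (S i) Hs) as [_ [B1 B2]].
    rewrite (cross_polar _ _ _ _ _ _ A1 A2 B1 B2).
    pose proof (Hinc i (S i) ltac:(lia) Hs) as Hlt.
    pose proof (Hrng i Hi). pose proof (Hrng (S i) Hs).
    destruct (Rlt_le_dec (th (S i) - th i) PI) as [Hg|Hg].
    + apply Rmult_lt_0_compat; [apply Rmult_lt_0_compat; auto|]. apply sin_gt_0; lra.
    + exfalso. apply (halfplane P t th ((th i + th (S i))/2) HS Hext HP Hpol).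
      intros k Hk. apply cos_np. pose proof (Hrng k Hk).
      assert (th k <= th i \/ th (S i) <= th k) as Ho.
      { destruct (Nat.lt_trichotomy k i) as [h|[h|h]].
        - left; apply Rlt_le, Hinc; auto; lia.
        - subst; lra.
        - destruct (Nat.eq_dec k (S i)) as [->|h']; [right; lra|].
          right; apply Rlt_le, Hinc; auto; lia. }
      destruct Ho; [right|left]; lra.
  - assert (Hs' : S i = length t) by lia.
    rewrite (tcyc_lt t i Hi), (tcyc_last t i Hs').
    assert (H0 : (0 < length t)%nat) by lia.
    destruct (Hpol i Hi) as [_ [A1 A2]]. destruct (Hpol 0%nat H0) as [_ [B1 B2]].
    rewrite (cross_polar _ _ _ _ _ _ A1 A2 B1 B2).
    pose proof (Hrng i Hi). pose proof (Hrng 0%nat H0).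
    assert (Hb : forall k, (k < length t)%nat -> th 0%nat <= th k <= th i).
    { intros k Hk. split.
      - destruct k; [lra|]. apply Rlt_le, Hinc; auto; lia.
      - destruct (Nat.eq_dec k i) as [->|h]; [lra|]. apply Rlt_le, Hinc; auto; lia. }
    pose proof (Hb 0%nat H0).
    replace (th 0%nat - th i) with ((th 0%nat + 2*PI - th i) + - (2*PI)) by ring.
    rewrite sin_plus, sin_neg, cos_neg, sin_2PI, cos_2PI.
    destruct (Rlt_le_dec (th 0%nat + 2*PI - th i) PI) as [Hg|Hg].
    + apply Rmult_lt_0_compat; [apply Rmult_lt_0_compat; auto|].
      pose proof (sin_gt_0 (th 0%nat + 2*PI - th i) ltac:(lra) Hg). lra.
    + exfalso. apply (halfplane P t th (th i + (th 0%nat + 2*PI - th i)/2) HS Hext HP Hpol).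
      intros k Hk. apply cos_np. pose proof (Hb k Hk). right; lra.
Qed.

Lemma pos_of_prod (a b s : R) : 0 < a -> 0 < b -> 0 < a * b * s -> 0 < s.
Proof. intros. destruct (Rle_lt_dec s 0); [|auto]. assert (a*b*s <= 0); [|lra].
  assert (0 < a*b) by nra. nra. Qed.

Lemma F2 (P t : list pt) (th : nat -> R) :
  standing P -> (forall q, In q t <-> extreme P q) ->
  (forall k, (k < length t)%nat -> polar_angle (nth k t (0,0)) (th k)) ->
  (forall i j, (i < j)%nat -> (j < length t)%nat -> th i < th j) ->
  forall i j, (i < length t)%nat -> (j < length t)%nat ->
  ~ (0 < cross (tcyc t i) (nth j t (0,0)) /\ 0 < cross (nth j t (0,0)) (tcyc t (S i))).
Proof.
  intros HS Hext Hpol Hinc i j Hi Hj [C1 C2]. pose proof PI_RGT_0 as Hpi.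
  assert (Hr : forall k, (k < length t)%nat -> 0 < norm2 (nth k t (0,0)))
    by (intros k Hk; exact (ext_nz P t _ HS Hext (nth_In _ _ Hk))).
  assert (Hrng : forall k, (k < length t)%nat -> 0 <= th k < 2 * PI)
    by (intros k Hk; apply (Hpol k Hk)).
  pose proof (Hrng i Hi). pose proof (Hrng j Hj).
  destruct (Hpol i Hi) as [_ [A1 A2]]. destruct (Hpol j Hj) as [_ [J1 J2]].
  rewrite (tcyc_lt t i Hi) in C1.
  rewrite (cross_polar _ _ _ _ _ _ A1 A2 J1 J2) in C1.
  apply pos_of_prod in C1; auto.
  apply sin_pos_range in C1; [|lra].
  destruct (Nat.lt_ge_cases (S i) (length t)) as [Hs|Hs].
  - rewrite (tcyc_lt t (S i) Hs) in C2.
    destruct (Hpol (S i) Hs) as [_ [B1 B2]].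
    rewrite (cross_polar _ _ _ _ _ _ J1 J2 B1 B2) in C2.
    apply pos_of_prod in C2; auto.
    pose proof (Hrng (S i) Hs).
    apply sin_pos_range in C2; [|lra].
    pose proof (Hinc i (S i) ltac:(lia) Hs) as Hlt.
    assert (th j <= th i \/ th (S i) <= th j) as Ho.
    { destruct (Nat.lt_trichotomy j i) as [h|[h|h]].
      - left; apply Rlt_le, Hinc; auto; lia.
      - subst; lra.
      - destruct (Nat.eq_dec j (S i)) as [->|h']; [right; lra|].
        right; apply Rlt_le, Hinc; auto; lia. }
    destruct Ho, C1, C2; lra.
  - assert (Hs' : S i = length t) by lia.
    rewrite (tcyc_last t i Hs') in C2.
    assert (Hz0 : (0 < length t)%nat) by lia.
    destruct (Hpol 0%nat Hz0) as [_ [B1 B2]].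
    rewrite (cross_polar _ _ _ _ _ _ J1 J2 B1 B2) in C2.
    apply pos_of_prod in C2; auto.
    pose proof (Hrng 0%nat Hz0).
    apply sin_pos_range in C2; [|lra].
    assert (th 0%nat <= th j <= th i).
    { split.
      - destruct j; [lra|]. apply Rlt_le, Hinc; auto; lia.
      - destruct (Nat.eq_dec j i) as [->|h]; [lra|]. apply Rlt_le, Hinc; auto; lia. }
    destruct C1, C2; lra.
Qed.

Lemma F3 (P t : list pt) :
  standing P -> (forall q, In q t <-> extreme P q) -> P <> nil ->
  forall v, exists k, (k < length t)%nat /\
    0 <= cross (tcyc t k) v /\ 0 <= cross v (tcyc t (S k)).
Proof.
  intros HS Hext HP v.
  assert (Hm : (0 < length t)%nat).
  { assert (H10 : ((1,0) : pt) <> (0,0)) by (intros E; injection E; lra).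
    destruct (max_in_t P t _ Hext HP H10) as [k [Hk _]]. lia. }
  destruct (classic (v = (0,0))) as [->|Hv].
  { exists 0%nat. split; [exact Hm|]. unfold cross; simpl. lra. }
  set (g := fun n => cross (tcyc t n) v).
  assert (Hper : forall n, g n = g (n mod length t)).
  { intros n. unfold g, tcyc. rewrite Nat.Div0.mod_mod. reflexivity. }
  set (w := (snd v, - fst v)).
  assert (Hw : w <> (0,0)).
  { intros E. apply Hv. unfold w in E. injection E as E1 E2. destruct v; simpl in *. f_equal; lra. }
  assert (Hw' : (- snd v, fst v) <> (0,0)).
  { intros E. apply Hv. injection E as E1 E2. destruct v; simpl in *. f_equal; lra. }
  destruct (walk g (length t) Hm Hper) as [k [Hk [G1 G2]]].
  - destruct (max_in_t P t _ Hext HP Hw) as [k [Hk Heq]].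
    pose proof (omega_pos P _ HS Hw). exists k. unfold g. rewrite tcyc_lt by exact Hk.
    unfold w, dot, cross in *; simpl in *. lra.
  - destruct (max_in_t P t _ Hext HP Hw') as [k [Hk Heq]].
    pose proof (omega_pos P _ HS Hw'). exists k. unfold g. rewrite tcyc_lt by exact Hk.
    unfold dot, cross in *; simpl in *. lra.
  - exists k. split; [exact Hk|]. unfold g in *. split; [lra|]. unfold cross in *; lra.
Qed.

Lemma combo1 (a b z x : pt) (c d : R) :
  dot a x = c -> dot b x = c -> dot z x = d -> 0 < c -> c < d ->
  0 < cross a b -> cross a z <= 0 ->
  exists al be, 0 <= al /\ 0 <= be /\ al + be < 1 /\
    fst a = al * fst z + be * fst b /\ snd a = al * snd z + be * snd b.
Proof.
  intros Ha Hb Hz Hc Hd D Haz.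
  set (E := cross z b).
  assert (HE : E * dot a x = cross a b * dot z x + cross z a * dot b x)
    by (unfold E, cross, dot; ring).
  rewrite Ha, Hb, Hz in HE.
  assert (Hza : cross z a = - cross a z) by (unfold cross; ring).
  assert (HEp : 0 < E) by nra.
  exists (cross a b / E), (cross z a / E).
  assert (0 < cross a b / E) by (apply Rdiv_lt_0_compat; lra).
  assert (0 <= cross z a / E) by (unfold Rdiv; apply Rmult_le_pos; [lra|apply Rlt_le, Rinv_0_lt_compat; lra]).
  assert (F1 : fst a = cross a b / E * fst z + cross z a / E * fst b)
    by (unfold E, cross in *; field; lra).
  assert (F2 : snd a = cross a b / E * snd z + cross z a / E * snd b)
    by (unfold E, cross in *; field; lra).
  assert (Hdot : c = cross a b / E * d + cross z a / E * c).
  { rewrite <- Ha at 1. rewrite <- Hb, <- Hz. unfold dot. rewrite F1, F2. ring. }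
  repeat split; try lra; try assumption.
  set (al := cross a b / E) in *. set (be := cross z a / E) in *. nra.
Qed.

Lemma combo2 (a b z x : pt) (c d : R) :
  dot a x = c -> dot b x = c -> dot z x = d -> 0 < c -> c < d ->
  0 < cross a b -> cross z b <= 0 ->
  exists al be, 0 <= al /\ 0 <= be /\ al + be < 1 /\
    fst b = al * fst z + be * fst a /\ snd b = al * snd z + be * snd a.
Proof.
  intros Ha Hb Hz Hc Hd D Hzb.
  set (E := cross a z).
  assert (HE : E * dot b x = cross b z * dot a x + cross a b * dot z x)
    by (unfold E, cross, dot; ring).
  rewrite Ha, Hb, Hz in HE.
  assert (Hbz : cross b z = - cross z b) by (unfold cross; ring).
  assert (HEp : 0 < E) by nra.
  exists (cross a b / E), (cross b z / E).
  assert (0 < cross a b / E) by (apply Rdiv_lt_0_compat; lra).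
  assert (0 <= cross b z / E) by (unfold Rdiv; apply Rmult_le_pos; [lra|apply Rlt_le, Rinv_0_lt_compat; lra]).
  assert (F1 : fst b = cross a b / E * fst z + cross b z / E * fst a)
    by (unfold E, cross in *; field; lra).
  assert (F2 : snd b = cross a b / E * snd z + cross b z / E * snd a)
    by (unfold E, cross in *; field; lra).
  assert (Hdot : c = cross a b / E * d + cross b z / E * c).
  { rewrite <- Hb at 1. rewrite <- Ha, <- Hz. unfold dot. rewrite F1, F2. ring. }
  repeat split; try lra; try assumption.
  set (al := cross a b / E) in *. set (be := cross b z / E) in *. nra.
Qed.

Lemma tcyc_in (t : list pt) (i : nat) : (0 < length t)%nat -> In (tcyc t i) t.
Proof. intros H. unfold tcyc. apply nth_In, Nat.mod_upper_bound. lia. Qed.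

Lemma partA (P t : list pt) (th : nat -> R) (xs : nat -> pt) :
  standing P -> (forall q, In q t <-> extreme P q) -> P <> nil ->
  (forall k, (k < length t)%nat -> polar_angle (nth k t (0,0)) (th k)) ->
  (forall i j, (i < j)%nat -> (j < length t)%nat -> th i < th j) ->
  (forall i, (i < length t)%nat ->
     unit_vec (xs i) /\
     dot (tcyc t i) (xs i) = dot (tcyc t (S i)) (xs i) /\
     0 < dot (tcyc t i) (xs i)) ->
  forall i, (i < length t)%nat -> forall q, In q P -> dot q (xs i) <= dot (tcyc t i) (xs i).
Proof.
  intros HS Hext HP Hpol Hinc Hxs i Hi q Hq.
  destruct (Hxs i Hi) as [Hu [Heq Hc]].
  destruct (Rle_lt_dec (dot q (xs i)) (dot (tcyc t i) (xs i))) as [h|h]; [exact h|exfalso].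
  pose proof (unit_nz _ Hu) as Hx.
  destruct (max_in_t P t _ Hext HP Hx) as [j [Hj Hz]].
  pose proof (omega_ge P q (xs i) Hq).
  assert (Hm : (0 < length t)%nat) by lia.
  pose proof (F1 P t th HS Hext HP Hpol Hinc i Hi) as D.
  pose proof (F2 P t th HS Hext Hpol Hinc i j Hi Hj) as N.
  assert (Ha : extreme P (tcyc t i)) by (apply Hext, tcyc_in, Hm).
  assert (Hb : extreme P (tcyc t (S i))) by (apply Hext, tcyc_in, Hm).
  assert (HzP : In (nth j t (0,0)) P) by (apply (proj1 (Hext _) (nth_In _ _ Hj))).
  assert (HaP : In (tcyc t i) P) by apply Ha.
  assert (HbP : In (tcyc t (S i)) P) by apply Hb.
  destruct (Rle_lt_dec (cross (tcyc t i) (nth j t (0,0))) 0) as [C|C].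
  - destruct (combo1 (tcyc t i) (tcyc t (S i)) (nth j t (0,0)) (xs i) _ _ eq_refl (eq_sym Heq) eq_refl Hc ltac:(lra) D C)
      as [al [be [H1 [H2 [H3 [E1 E2]]]]]].
    exact (not_ext_combo P _ _ _ al be HS HzP HbP H1 H2 H3 E1 E2 Ha).
  - destruct (Rle_lt_dec (cross (nth j t (0,0)) (tcyc t (S i))) 0) as [C'|C'].
    + destruct (combo2 (tcyc t i) (tcyc t (S i)) (nth j t (0,0)) (xs i) _ _ eq_refl (eq_sym Heq) eq_refl Hc ltac:(lra) D C')
        as [al [be [H1 [H2 [H3 [E1 E2]]]]]].
      exact (not_ext_combo P _ _ _ al be HS HzP HaP H1 H2 H3 E1 E2 Hb).
    + apply N; split; assumption.
Qed.

Theorem lemma1 (P : list pt) (eps : R) (t : list pt) (xs : nat -> pt) :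
  standing P ->
  0 < eps < 1 ->
  NoDup t ->
  (forall q, In q t <-> extreme P q) ->
  ccw_indexed t ->
  (forall i, (i < length t)%nat ->
     unit_vec (xs i) /\
     dot (tcyc t i) (xs i) = dot (tcyc t (S i)) (xs i) /\
     0 < dot (tcyc t i) (xs i)) ->
  forall p, In p P ->
    (in_S P eps t xs p <-> exists x, approx_voronoi_cell P eps p x).
Proof.
  intros HS Heps HND Hext [th [Hpol Hinc]] Hxs p Hp.
  assert (HP : P <> nil) by (intros E; subst P; destruct Hp).
  split.
  - intros [Ht | [_ [_ [i [Hi Hge]]]]].
    + apply Hext in Ht. destruct Ht as [_ [y [Hy Hv]]].
      pose proof (omega_pos P y HS Hy).
      exists y. split; [exact Hy|]. nra.
    + destruct (Hxs i Hi) as [Hu [Heq Hc]].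
      pose proof (unit_nz _ Hu) as Hx.
      exists (xs i). split; [exact Hx|].
      destruct (omega_att P (xs i) HP) as [q [Hq Hw]].
      pose proof (partA P t th xs HS Hext HP Hpol Hinc Hxs i Hi q Hq).
      nra.
  - intros [y [Hy Hge]].
    destruct (classic (In p t)) as [Ht|Hnt]; [left; exact Ht|].
    right. split; [exact Hp|]. split; [exact Hnt|].
    apply NNPP; intro Hno.
    assert (Hall : forall i, (i < length t)%nat ->
              dot p (xs i) < (1 - eps) * dot (tcyc t i) (xs i)).
    { intros i Hi. destruct (Rlt_le_dec (dot p (xs i)) ((1 - eps) * dot (tcyc t i) (xs i)))
        as [h|h]; [exact h|]. exfalso; apply Hno. exists i; split; [exact Hi|lra]. }
    destruct (F3 P t HS Hext HP p) as [k [Hk [G1 G2]]].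
    pose proof (F1 P t th HS Hext HP Hpol Hinc k Hk) as D.
    destruct (Hxs k Hk) as [_ [Heq Hc]].
    pose proof (Hall k Hk) as Hlt.
    assert (Hm : (0 < length t)%nat) by lia.
    pose proof (omega_pos P y HS Hy) as Wp.
    assert (HaP : In (tcyc t k) P) by (apply (proj1 (Hext _) (tcyc_in t k Hm))).
    assert (HbP : In (tcyc t (S k)) P) by (apply (proj1 (Hext _) (tcyc_in t (S k) Hm))).
    pose proof (omega_ge P _ y HaP) as Wa. pose proof (omega_ge P _ y HbP) as Wb.
    set (a := tcyc t k) in *. set (b := tcyc t (S k)) in *.
    set (mu := cross p b) in *. set (nu := cross a p) in *. set (Dd := cross a b) in *.
    assert (I1 : Dd * dot p (xs k) = mu * dot a (xs k) + nu * dot b (xs k))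
      by (unfold Dd, mu, nu, cross, dot; ring).
    assert (I2 : Dd * dot p y = mu * dot a y + nu * dot b y)
      by (unfold Dd, mu, nu, cross, dot; ring).
    rewrite <- Heq in I1.
    set (c := dot a (xs k)) in *. set (W := omega y P) in *.
    assert (S1 : mu + nu < Dd * (1 - eps)).
    { assert ((mu + nu) * c < (Dd * (1 - eps)) * c) by nra. nra. }
    assert (S2 : Dd * dot p y <= (mu + nu) * W) by nra.
    assert (S3 : (mu + nu) * W < Dd * (1 - eps) * W) by nra.
    nra.
Qed.
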